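(* Let $T$ be a left-linear term rewriting system and let $\mathcal{A}$ be a reduction sequence of $T$ whose length is a countable ordinal. Then there exists a stepwise-or-normal proof term $\psi$ that denotes $\mathcal{A}$.
   Context: Setting. $T=(\Sigma,R)$: $\Sigma$ finite; each rule $\mu:l\to r$ has $l$ finite, non-variable, linear, variables of $r$ among those of $l$; terms are finite or infinite trees; $d(t,u)=0$ if $t=u$, else $2^{-k}$ with $k$ the least depth at which they differ. Reduction steps and sequences. A reduction step is $a=\langle t,p,\mu,\sigma\rangle$ with $t|_p=\sigma l$ for $\mu:l\to r$; $src(a)=t$, $tgt(a)=t[\sigma r]_p$, depth $|p|$. A reduction sequence is either the empty sequence $id_t$ (source $t$, length $0$) or a sequence $\langle a_\alpha\rangle_{\alpha<\beta}$, $\beta>0$, of steps such that $src(a_{\alpha+1})=tgt(a_\alpha)$ whenever $\alpha+1<\beta$, and for each limit $\beta_0<\beta$: $tgt(a_\alpha)$ converges as $\alpha\to\beta_0$, its limit is $src(a_{\beta_0})$, and for every $n$ there is $\beta'<\beta_0$ with depth of $a_\alpha$ $>n$ for $\beta'<\alpha<\beta_0$. Its length is $\beta$ and its source $src(a_0)$. Proof terms. $\Sigma^R$ extends $\Sigma$ by a symbol $\mu$ of arity $n$ per rule ($n$ distinct variables in $l$). A one-step is a closed term over $\Sigma^R$ with exactly one rule-symbol occurrence, at position $p$, say $\mu(t_1,..,t_n)$; its source replaces it by $l[t_1,..,t_n]$, its target by $r[t_1,..,t_n]$. Stepwise proof terms are one-steps, $\psi_1\cdot\psi_2$ with $tgt(\psi_1)=src(\psi_2)$,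 and infinite concatenations $\prod_{i<\omega}\psi_i=\psi_0\cdot(\psi_1\cdot\cdots)$ with $tgt(\psi_i)=src(\psi_{i+1})$ of stepwise proof terms (targets of infinite concatenations are $\lim_i tgt(\psi_i)$ when defined; sources are those of the first factor). Stepwise-or-normal: stepwise or a rule-free term of $\mathrm{Ter}^\infty(\Sigma)$ (whose source is itself). Number of steps $|\psi|$: $0$, $1$, $|\psi_1|+|\psi_2|$, $\sup_n(|\psi_0|+\dots+|\psi_n|)$ respectively; $\alpha$-th component $\psi[\alpha]$ for $\alpha<|\psi|$: $\psi[0]=\psi$ for one-steps, $(\psi_1\cdot\psi_2)[\alpha]=\psi_1[\alpha]$ if $\alpha<|\psi_1|$ else $\psi_2[\beta]$ with $|\psi_1|+\beta=\alpha$, $(\prod\psi_i)[\alpha]=\psi_k[\gamma]$ for the unique $k,\gamma$ with $\alpha=|\psi_0|+\dots+|\psi_{k-1}|+\gamma$, $\gamma<|\psi_k|$. Denotation. A one-step $\psi$ denotes a step $a=\langle t,p,\mu,\sigma\rangle$ iff $src(\psi)=t$, $tgt(\psi)=tgt(a)$, and the symbol of $\psi$ at $p$ is $\mu$. A stepwise-or-normal $\psi$ denotes a reduction sequence $\mathcal{A}$ iff $|\psi|$ equals the length of $\mathcal{A}$, $src(\psi)=src(\mathcal{A})$, and $\psi[\alpha]$ denotes the $\alpha$-th step of $\mathcal{A}$ for every $\alpha$ less than the length. *)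

(* Defs.v *)
From mathcomp Require Import all_boot.
Set Implicit Arguments.
Unset Strict Implicit.
Unset Printing Implicit Defensive.

(* Finite or infinite trees over a symbol type S with arity ar, given  *)
(* as partial maps from positions (seq nat) to symbols.                *)
Definition tree (S : Type) := seq nat -> option S.

Definition is_term (S : Type) (ar : S -> nat) (t : tree S) : Prop :=
  t [::] <> None /\
  forall (p : seq nat) (i : nat),
    t (rcons p i) <> None <-> exists s, t p = Some s /\ i < ar s.

Definition is_finite_tree (S : Type) (t : tree S) : Prop :=
  exists n, forall q : seq nat, n < size q -> t q = None.

Definition subtree (S : Type) (t : tree S) (p : seq nat) : tree S :=
  fun q => t (p ++ q).

Definition replace (S : Type) (t : tree S) (p : seq nat) (s : tree S) : tree S :=
  fun q => if take (size p) q == p then s (drop (size p) q) else t q.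

(* d(t,u) <= 2^-(n+1): t and u agree at all positions of depth <= n *)
Definition agree (S : Type) (n : nat) (t u : tree S) : Prop :=
  forall q : seq nat, size q <= n -> t q = u q.

Definition converges (S : Type) (ts : nat -> tree S) (t : tree S) : Prop :=
  forall n, exists N, forall i, N <= i -> agree n (ts i) t.

Section TRS.
Variable F : finType.
Variable arF : F -> nat.
Variable Rl : Type.
Variable rvars : Rl -> seq nat. (* the distinct variables of l, in a fixed order *)
Variable lhs rhs : Rl -> tree (F + nat). (* patterns; variables are inr x *)

Definition arP (s : F + nat) : nat := match s with inl f => arF f | inr _ => 0 end.
Definition rarity (mu : Rl) : nat := size (rvars mu).
Definition arR (s : F + Rl) : nat := match s with inl f => arF f | inr mu => rarity mu end.

Definition term := tree F.

Definition occurs (x : nat) (l : tree (F + nat)) : Prop :=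
  exists q, l q = Some (inr x).

Definition wf_trs : Prop :=
  forall mu : Rl,
    [/\ is_term arP (lhs mu) /\ is_finite_tree (lhs mu),
        (exists f, lhs mu [::] = Some (inl f)),
        (forall q1 q2 x, lhs mu q1 = Some (inr x) ->
                          lhs mu q2 = Some (inr x) -> q1 = q2),
        uniq (rvars mu) /\ (forall x, occurs x (lhs mu) <-> x \in rvars mu)
      & (is_term arP (rhs mu) /\ is_finite_tree (rhs mu)) /\
        (forall x, occurs x (rhs mu) -> occurs x (lhs mu))].

Fixpoint inst_aux (l : tree (F + nat)) (sigma : nat -> term) (acc q : seq nat)
  : option F :=
  match l acc with
  | Some (inr x) => sigma x q
  | Some (inl f) =>
      match q with
      | [::] => Some f
      | i :: q' => inst_aux l sigma (rcons acc i) q'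
      end
  | None => None
  end.
Definition inst (l : tree (F + nat)) (sigma : nat -> term) : term :=
  fun q => inst_aux l sigma [::] q.

Record step := Step { st_t : term; st_p : seq nat; st_mu : Rl; st_sigma : nat -> term }.

Definition valid_step (a : step) : Prop :=
  is_term arF (st_t a) /\
  subtree (st_t a) (st_p a) = inst (lhs (st_mu a)) (st_sigma a).

Definition step_tgt (a : step) : term :=
  replace (st_t a) (st_p a) (inst (rhs (st_mu a)) (st_sigma a)).

Definition strict_well_order (I : Type) (lt : I -> I -> Prop) : Prop :=
  [/\ (forall x, ~ lt x x),
      (forall x y z, lt x y -> lt y z -> lt x z),
      (forall x y, lt x y \/ x = y \/ lt y x)
    & well_founded lt].

Definition is_least (I : Type) (lt : I -> I -> Prop) (b : I) : Prop :=
  forall a, ~ lt a b.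

Definition is_succ (I : Type) (lt : I -> I -> Prop) (a b : I) : Prop :=
  lt a b /\ forall c, ~ (lt a c /\ lt c b).

Definition is_limit (I : Type) (lt : I -> I -> Prop) (b : I) : Prop :=
  (exists a, lt a b) /\ (forall a, lt a b -> exists c, lt a c /\ lt c b).

(* A reduction sequence with source t0, index order (I, lt) and steps A.
   If I is empty this is id_{t0}. *)
Definition is_redseq (I : Type) (lt : I -> I -> Prop) (t0 : term) (A : I -> step)
  : Prop :=
  [/\ strict_well_order lt /\ is_term arF t0,
      (forall a, valid_step (A a)),
      (forall a, is_least lt a -> st_t (A a) = t0),
      (forall a b, is_succ lt a b -> st_t (A b) = step_tgt (A a))
    & (forall b0, is_limit lt b0 ->
         (forall n, exists b', lt b' b0 /\
            forall a, lt b' a -> lt a b0 -> agree n (step_tgt (A a)) (st_t (A b0))) /\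
         (forall n, exists b', lt b' b0 /\
            forall a, lt b' a -> lt a b0 -> n < size (st_p (A a))))].

Definition countable_type (I : Type) : Prop :=
  exists g : I -> nat, forall x y, g x = g y -> x = y.

Definition strip (o : option (F + Rl)) : option F :=
  match o with Some (inl f) => Some f | _ => None end.

Definition onestep_at (psi : tree (F + Rl)) (p : seq nat) (mu : Rl) : Prop :=
  [/\ is_term arR psi, psi p = Some (inr mu)
    & forall q nu, psi q = Some (inr nu) -> q = p].

(* arguments t_1..t_n of mu(t_1..t_n), attached to the variables of l *)
Definition osubst (psi : tree (F + Rl)) (p : seq nat) (mu : Rl) : nat -> term :=
  fun x q => strip (psi (p ++ index x (rvars mu) :: q)).

Definition osrc (psi : tree (F + Rl)) (p : seq nat) (mu : Rl) : term :=
  replace (fun q => strip (psi q)) p (inst (lhs mu) (osubst psi p mu)).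
Definition otgt (psi : tree (F + Rl)) (p : seq nat) (mu : Rl) : term :=
  replace (fun q => strip (psi q)) p (inst (rhs mu) (osubst psi p mu)).

Inductive pt : Type :=
| One of tree (F + Rl)
| Cat of pt & pt
| Inf of (nat -> pt).

Fixpoint has_src (psi : pt) (t : term) : Prop :=
  match psi with
  | One phi => exists p mu, onestep_at phi p mu /\ t = osrc phi p mu
  | Cat a _ => has_src a t
  | Inf f => has_src (f 0) t
  end.

Fixpoint has_tgt (psi : pt) (t : term) : Prop :=
  match psi with
  | One phi => exists p mu, onestep_at phi p mu /\ t = otgt phi p mu
  | Cat _ b => has_tgt b t
  | Inf f => exists ts, (forall i, has_tgt (f i) (ts i)) /\ converges ts t
  end.

Fixpoint stepwise (psi : pt) : Prop :=
  match psi with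
  | One phi => exists p mu, onestep_at phi p mu
  | Cat a b => [/\ stepwise a, stepwise b & exists t, has_tgt a t /\ has_src b t]
  | Inf f => forall i, stepwise (f i) /\ exists t, has_tgt (f i) t /\ has_src (f i.+1) t
  end.

(* Components: psi[alpha] is located by the decomposition
   alpha = |psi_1| + beta  /  |psi_0|+...+|psi_{k-1}| + gamma;
   we record the path of choices (0/1 for binary, k for infinite). *)
Fixpoint comp_at (psi : pt) (q : seq nat) : option (tree (F + Rl)) :=
  match psi, q with
  | One phi, [::] => Some phi
  | Cat a _, 0 :: q' => comp_at a q'
  | Cat _ b, 1 :: q' => comp_at b q'
  | Inf f, i :: q' => comp_at (f i) q'
  | _, _ => None
  end.

(* lexicographic order on paths = the ordinal order of components *)
Fixpoint lexlt (u v : seq nat) : Prop :=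
  match u, v with
  | x :: u', y :: v' => x < y \/ (x = y /\ lexlt u' v')
  | [::], _ :: _ => True
  | _, _ => False
  end.

Inductive sn_pt : Type :=
| SW of pt
| NF of term.

Definition stepwise_or_normal (psi : sn_pt) : Prop :=
  match psi with
  | SW p => stepwise p
  | NF t => is_term arF t
  end.

Definition odenotes (phi : tree (F + Rl)) (a : step) : Prop :=
  (exists p mu, [/\ onestep_at phi p mu, osrc phi p mu = st_t a
                   & otgt phi p mu = step_tgt a]) /\
  phi (st_p a) = Some (inr (st_mu a)).

(* psi denotes the reduction sequence (I, lt, t0, A): same number of steps
   (an order isomorphism between the index well-order and the components
   of psi), same source, and psi[alpha] denotes A alpha. *)
Definition denotes (psi : sn_pt) (I : Type) (lt : I -> I -> Prop)
  (t0 : term) (A : I -> step) : Prop :=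
  match psi with
  | NF t => t = t0 /\ (I -> False)
  | SW p =>
      has_src p t0 /\
      exists f : I -> seq nat,
        [/\ (forall a, comp_at p (f a) <> None),
            (forall q, comp_at p q <> None -> exists a, f a = q),
            (forall a b, lt a b <-> lexlt (f a) (f b))
          & (forall a phi, comp_at p (f a) = Some phi -> odenotes phi (A a))]
  end.

End TRS.

(* Main.v *)
Require Import Defs.
From mathcomp Require Import all_boot.
From Stdlib Require Import Classical FunctionalExtensionality ClassicalEpsilon.
Set Implicit Arguments.
Unset Strict Implicit.
Unset Printing Implicit Defensive.

Lemma term_nonnil (S : Type) (ar : S -> nat) (t : tree S) q r :
  is_term ar t -> t (q ++ r) <> None -> t q <> None.
Proof.
move=> [_ Ht]; elim/last_ind: r => [|r i IH]; first by rewrite cats0.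
rewrite -rcons_cat => /Ht [s [Hs _]]; apply: IH; by rewrite Hs.
Qed.

Lemma subtree_term (S : Type) (ar : S -> nat) (t : tree S) P :
  is_term ar t -> t P <> None -> is_term ar (subtree t P).
Proof.
move=> [H0 Ht] HP; split; first by rewrite /subtree cats0.
move=> q i; rewrite /subtree -rcons_cat; exact: Ht.
Qed.

Lemma prefix_inl (Fx : Type) (ar : Fx -> nat) (l : tree (Fx + nat)) q :
  is_term (fun s => match s with inl f => ar f | inr _ => 0 end) l ->
  l q <> None -> forall k, k < size q -> exists f, l (take k q) = Some (inl f).
Proof.
move=> Hl Hq k Hk.
have E : take k.+1 q = rcons (take k q) (nth 0 q k).
  by rewrite (take_nth 0 Hk).
have : l (take k.+1 q) <> None.
  by apply: (@term_nonnil _ _ _ _ (drop k.+1 q) Hl); rewrite cat_take_drop.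
rewrite E => /(proj2 Hl) [[f|x] [Hs Hi]]; first by exists f.
by [].
Qed.

Lemma inst_path (Fx : finType) (l : tree (Fx + nat)) (sg : nat -> term Fx) q acc r :
  (forall k, k < size q -> exists f, l (acc ++ take k q) = Some (inl f)) ->
  inst_aux l sg acc (q ++ r) = inst_aux l sg (acc ++ q) r.
Proof.
elim: q acc => [|i q IH] acc H; first by rewrite cats0.
have [f Hf] := H 0 erefl; rewrite take0 cats0 in Hf.
rewrite cat_cons /= Hf IH; first by rewrite cat_rcons.
move=> k Hk; have [g Hg] := H k.+1 Hk; exists g; by rewrite cat_rcons.
Qed.

Lemma inst_ext (Fx : finType) (l : tree (Fx + nat)) (s1 s2 : nat -> term Fx) :
  (forall x, occurs x l -> s1 x = s2 x) -> forall q acc, inst_aux l s1 acc q = inst_aux l s2 acc q.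
Proof.
move=> H; elim=> [|i q IH] acc /=.
- case E: (l acc) => [[f|x]|] //; by rewrite H //; exists acc.
- case E: (l acc) => [[f|x]|] //; by rewrite H //; exists acc.
Qed.

Lemma omap_ex (Fx Rx : Type) (arF : Fx -> nat) (arR : Fx + Rx -> nat) (u : option Fx) i :
  (forall f, arR (inl f) = arF f) ->
  (exists s', omap inl u = Some s' /\ i < arR s') <-> (exists s, u = Some s /\ i < arF s).
Proof.
move=> Ha; case: u => [f|] /=; split.
- move=> [s' [H1 H2]]; case: H1 => H1; subst s'; exists f; split => //; by rewrite -Ha.
- move=> [s [H1 H2]]; case: H1 => H1; subst s; exists (inl f); split => //; by rewrite Ha.
- by move=> [? [H1 _]].
- by move=> [? [H1 _]].
Qed.

Lemma inst_aux_var (Fx : finType) (l : tree (Fx + nat)) sg acc x r :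
  l acc = Some (inr x) -> inst_aux l sg acc r = sg x r.
Proof. by case: r => [|??] /= ->. Qed.

Section OneStep.
Variables (F : finType) (arF : F -> nat) (Rl : Type) (rvars : Rl -> seq nat)
  (lhs rhs : Rl -> tree (F + nat)).
Hypothesis HT : wf_trs arF rvars lhs rhs.

Definition mkphi (t : term F) (p : seq nat) (mu : Rl) (sg : nat -> term F)
  : tree (F + Rl) := fun q =>
  if take (size p) q == p then
    match drop (size p) q with
    | [::] => Some (inr mu)
    | j :: r => if j < size (rvars mu) then omap inl (sg (nth 0 (rvars mu) j) r) else None
    end
  else omap inl (t q).

Lemma mkphi_in t p mu sg r : mkphi t p mu sg (p ++ r) =
    match r with
    | [::] => Some (inr mu)
    | j :: r => if j < size (rvars mu) then omap inl (sg (nth 0 (rvars mu) j) r) else None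
    end.
Proof. by rewrite /mkphi take_size_cat // drop_size_cat // eqxx. Qed.

Lemma mkphi_out t p mu sg q : take (size p) q != p -> mkphi t p mu sg q = omap inl (t q).
Proof. by rewrite /mkphi => /negbTE ->. Qed.

Lemma mkphi_p t p mu sg : mkphi t p mu sg p = Some (inr mu).
Proof. by have := mkphi_in t p mu sg [::]; rewrite cats0. Qed.

Lemma strip_omap (u : option F) : strip (omap (@inl F Rl) u) = u.
Proof. by case: u. Qed.

Lemma omap_none (u : option F) : (omap (@inl F Rl) u <> None) <-> (u <> None).
Proof. by case: u. Qed.

Lemma onestep_ok t p mu sg :
  is_term arF t -> subtree t p = inst (lhs mu) sg ->
  [/\ onestep_at arF rvars (mkphi t p mu sg) p mu,
      osrc rvars lhs (mkphi t p mu sg) p mu = t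
    & otgt rvars rhs (mkphi t p mu sg) p mu = replace t p (inst (rhs mu) sg)].
Proof.
move=> Hterm Hsub.
have [[Hlt _] [f0 Hf0] _ [_ Hocc] [_ Hrr]] := HT mu.
have Htp : forall q, t (p ++ q) = inst (lhs mu) sg q.
  by move=> q; rewrite -Hsub.
have Hinstv : forall qx r x, lhs mu qx = Some (inr x) -> inst (lhs mu) sg (qx ++ r) = sg x r.
  move=> qx r x Hx; rewrite /inst (@inst_path _ _ _ qx [::] r) /=.
    exact: inst_aux_var.
  move=> k Hk; apply: (@prefix_inl _ arF) => //; by rewrite Hx.
have Hsgt : forall x, x \in rvars mu -> is_term arF (sg x).
  move=> x; rewrite -Hocc => -[qx Hqx].
  have -> : sg x = subtree t (p ++ qx).
    apply: functional_extensionality => r.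
    by rewrite /subtree -catA Htp (Hinstv _ _ _ Hqx).
  apply: subtree_term => //.
  case/lastP: qx Hqx => [|q' i] Hqx; first by rewrite Hqx in Hf0.
  have [[g|y] [Hg Hi]] := proj1 (proj2 Hlt q' i) (ltac:(by rewrite Hqx)); last by [].
  have Htq : t (p ++ q') = Some g.
    rewrite Htp /inst -(cats0 q') (@inst_path _ _ _ q' [::] [::]) /= ?Hg //.
    move=> k Hk; apply: (@prefix_inl _ arF) => //; by rewrite Hg.
  rewrite -rcons_cat; apply/(proj2 Hterm); by exists g.
have Hosub : forall x, x \in rvars mu -> osubst rvars (mkphi t p mu sg) p mu x = sg x.
  move=> x Hx; apply: functional_extensionality => r.
  by rewrite /osubst mkphi_in index_mem Hx strip_omap nth_index.
have Hinl : inst (lhs mu) (osubst rvars (mkphi t p mu sg) p mu) = inst (lhs mu) sg.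
  apply: functional_extensionality => q; apply: inst_ext => x Hx.
  by apply: Hosub; rewrite -Hocc.
have Hinr : inst (rhs mu) (osubst rvars (mkphi t p mu sg) p mu) = inst (rhs mu) sg.
  apply: functional_extensionality => q; apply: inst_ext => x Hx.
  by apply: Hosub; rewrite -Hocc; apply: Hrr.
have Htpn : t p <> None by rewrite -(cats0 p) Htp /inst /= Hf0.
split.
- split.
  +
    split.
      case E: (take (size p) [::] == p).
        move/eqP: E => /= E; subst p; by rewrite /mkphi.
      rewrite mkphi_out ?E //; case: (t [::]) (proj1 Hterm) => //.
    move=> q i.
    case E: (take (size p) q == p).
    * move/eqP: E => E; rewrite -(cat_take_drop (size p) q) E.
      rewrite rcons_cat !mkphi_in.
      case: (drop (size p) q) => [|j r] /=.
      - case Hi: (i < size (rvars mu)).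
          have Hx := mem_nth 0 Hi.
          split => // _.
          + exists (inr mu); by split.
          + case: (sg (nth 0 (rvars mu) i) [::]) (proj1 (Hsgt _ Hx)) => //.
        split => //; by move=> [s [[<-]]] /=; rewrite Hi.
      - case Hj: (j < size (rvars mu)).
          have Hx := mem_nth 0 Hj.
          rewrite (@omap_ex _ _ arF) //.
          exact: iff_trans (omap_none _) (proj2 (Hsgt _ Hx) r i).
        by split => // -[s []].
    * rewrite (@mkphi_out t p mu sg q) ?E //.
      case E2: (take (size p) (rcons q i) == p).
      - move/eqP: E2 => E2.
        have : rcons q i = p ++ drop (size p) (rcons q i) by rewrite -[X in X ++ _]E2 cat_take_drop.
        case/lastP: (drop (size p) (rcons q i)) => [|r k].
          rewrite cats0 => Hp; rewrite Hp mkphi_p; split => // _.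
          have : t (rcons q i) <> None by rewrite Hp.
          move=> /(proj2 Hterm) [s [Hs Hi]]; exists (inl s); by rewrite Hs.
        rewrite -rcons_cat => /rcons_inj [Hq _].
        by rewrite Hq take_size_cat // eqxx in E.
      - rewrite mkphi_out ?E2 // (@omap_ex _ _ arF) //.
        exact: iff_trans (omap_none _) (proj2 Hterm q i).
  + exact: mkphi_p.
  + move=> q nu.
    case E: (take (size p) q == p).
    * move/eqP: E => E; rewrite -(cat_take_drop (size p) q) E mkphi_in.
      case: (drop (size p) q) => [|j r]; first by rewrite cats0.
      case: ifP => // _; by case: (sg _ r).
    * rewrite mkphi_out ?E //; by case: (t q).
- apply: functional_extensionality => q; rewrite /osrc /replace Hinl.
  case: ifP => E.
  + by move/eqP: E => E; rewrite -Htp -{1}E cat_take_drop.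
  + by rewrite mkphi_out ?E // strip_omap.
- apply: functional_extensionality => q; rewrite /otgt /replace Hinr.
  case: ifP => E //.
  by rewrite mkphi_out ?E // strip_omap.
Qed.

End OneStep.

Section Main.
Variables (F : finType) (arF : F -> nat) (Rl : Type) (rvars : Rl -> seq nat)
  (lhs rhs : Rl -> tree (F + nat)).
Hypothesis HT : wf_trs arF rvars lhs rhs.
Variables (I : Type) (lt : I -> I -> Prop) (t0 : term F) (A : I -> step F Rl).
Hypothesis HA : is_redseq arF lhs rhs lt t0 A.

Lemma irr x : ~ lt x x.
Proof. by case: HA => [[[? _ _ _] _] _ _ _ _]. Qed.
Lemma trn x y z : lt x y -> lt y z -> lt x z.
Proof. case: HA => [[[_ H _ _] _] _ _ _ _]; exact: H. Qed.
Lemma tot x y : lt x y \/ x = y \/ lt y x.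
Proof. case: HA => [[[_ _ H _] _] _ _ _ _]; exact: H. Qed.
Lemma wfl : well_founded lt.
Proof. by case: HA => [[[_ _ _ H] _] _ _ _ _]. Qed.
Lemma Hvalid x : valid_step arF lhs (A x).
Proof. by case: HA => [_ H _ _ _]. Qed.
Lemma Hleast x : is_least lt x -> st_t (A x) = t0.
Proof. by case: HA => [_ _ H _ _]; apply: H. Qed.
Lemma Hsuc x y : is_succ lt x y -> st_t (A y) = step_tgt rhs (A x).
Proof. by case: HA => [_ _ _ H _]; apply: H. Qed.
Lemma Hlim b0 : is_limit lt b0 -> forall n, exists b', lt b' b0 /\
            forall a, lt b' a -> lt a b0 -> agree n (step_tgt rhs (A a)) (st_t (A b0)).
Proof. by case: HA => [_ _ _ _ H] Hb; case: (H b0 Hb). Qed.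

Definition le x y := lt x y \/ x = y.
Lemma lt_irr_le x y : lt x y -> le y x -> False.
Proof. move=> H [H'|E]; [exact: irr _ (trn H H') | subst; exact: irr _ H]. Qed.
Lemma not_lt_le x y : ~ lt x y -> le y x.
Proof. case: (tot x y) => [//|[->|H] _]; [by right | by left]. Qed.
Lemma le_lt x y z : le x y -> lt y z -> lt x z.
Proof. case=> [H|E] H'; [exact: trn H H' | by subst]. Qed.
Lemma lt_le x y z : lt x y -> le y z -> lt x z.
Proof. move=> H [H'|E]; [exact: trn H H' | by subst]. Qed.
Lemma le_le x y z : le x y -> le y z -> le x z.
Proof. move=> [H|E] H'; [left; exact: lt_le H H' | by subst]. Qed.

Lemma agree_trans n (t1 t2 t3 : term F) : agree n t1 t2 -> agree n t2 t3 -> agree n t1 t3.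
Proof. by move=> H1 H2 q Hq; rewrite H1 // H2. Qed.
Lemma agree_sym n (t1 t2 : term F) : agree n t1 t2 -> agree n t2 t1.
Proof. by move=> H1 q Hq; rewrite H1. Qed.

Lemma limit_close cc : is_limit lt cc -> forall n, exists b'', lt b'' cc /\
   forall y, lt b'' y -> lt y cc -> agree n (st_t (A y)) (st_t (A cc)).
Proof.
move=> Hcc n; have [b' [Hb' Hag]] := Hlim Hcc n.
have [b'' [H1 H2]] := proj2 Hcc b' Hb'.
exists b''; split => // y Hy Hyc.
case: (classic (exists x, is_succ lt x y)) => [[x Hx]|Hns].
- rewrite (Hsuc Hx); apply: Hag => //; last exact: trn (proj1 Hx) Hyc.
  case: (tot x b'') => [Hxb|[->//|Hbx]]; last exact: trn H1 Hbx.
  by exfalso; apply: (proj2 Hx b''); split.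
- have Hly : is_limit lt y.
    split; first by exists b''.
    move=> x Hx; apply: NNPP => Hne; apply: Hns; exists x; split => // c [Hc1 Hc2].
    by apply: Hne; exists c.
  have [by_ [Hby Hagy]] := Hlim Hly n.
  have [m [Hm1 Hm2 Hmy]] : exists m, [/\ le by_ m, le b'' m & lt m y].
    case: (tot by_ b'') => [H|[->|H]].
    + exists b''; split => //; [by left | by right].
    + exists b''; split => //; by right.
    + exists by_; split => //; [by right | by left].
  have [z [Hmz Hzy]] := proj2 Hly m Hmy.
  apply: (@agree_trans _ _ (step_tgt rhs (A z))).
    apply: agree_sym; apply: Hagy => //; exact: le_lt Hm1 Hmz.
  apply: Hag; last exact: trn Hzy Hyc.
  exact: trn H1 (le_lt Hm2 Hmz).
Qed.

Lemma has_least : forall x : I, exists m, is_least lt m.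
Proof.
apply: (well_founded_ind wfl) => x IH.
case: (classic (exists y, lt y x)) => [[y Hy]|H]; first exact: IH y Hy.
exists x => y Hy; apply: H; by exists y.
Qed.


Definition phi x := mkphi rvars (st_t (A x)) (st_p (A x)) (st_mu (A x)) (st_sigma (A x)).

Lemma phi_ok x : [/\ onestep_at arF rvars (phi x) (st_p (A x)) (st_mu (A x)),
   osrc rvars lhs (phi x) (st_p (A x)) (st_mu (A x)) = st_t (A x)
 & otgt rvars rhs (phi x) (st_p (A x)) (st_mu (A x)) = step_tgt rhs (A x)].
Proof. case: (Hvalid x) => Ht Hs; exact: onestep_ok. Qed.

Lemma one_den x : odenotes arF rvars lhs rhs (phi x) (A x).
Proof.
split; last exact: mkphi_p.
case: (phi_ok x) => H1 H2 H3; by exists (st_p (A x)), (st_mu (A x)).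
Qed.
Lemma one_sw x : stepwise arF rvars lhs rhs (One (phi x)).
Proof. case: (phi_ok x) => H1 H2 H3; by exists (st_p (A x)), (st_mu (A x)). Qed.
Lemma one_src x : has_src arF rvars lhs (One (phi x)) (st_t (A x)).
Proof. case: (phi_ok x) => H1 H2 H3; by exists (st_p (A x)), (st_mu (A x)). Qed.
Lemma one_tgt x : has_tgt arF rvars rhs (One (phi x)) (step_tgt rhs (A x)).
Proof. case: (phi_ok x) => H1 H2 H3; by exists (st_p (A x)), (st_mu (A x)). Qed.

Definition olt (x : I) (b : option I) := match b with Some y => lt x y | None => True end.
Definition oltt (u v : option I) := match u with Some x => olt x v | None => False end.
Definition inI a b x := le a x /\ olt x b.

Lemma olt_trans x y b : lt x y -> olt y b -> olt x b.
Proof. case: b => //= c; exact: trn. Qed.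

Lemma oltt_wf : well_founded oltt.
Proof.
have HS : forall x, Acc oltt (Some x).
  apply: (well_founded_ind wfl) => x IH; apply: Acc_intro => y.
  case: y => [y|] Hy; last by case: Hy.
  exact: IH.
move=> u; case: u => [x|]; first exact: HS.
apply: Acc_intro => y; case: y => [y|] Hy; [exact: HS | by case: Hy].
Qed.

Record spec a b (psi : pt F Rl) (f : I -> seq nat) : Prop := Spec {
  sp_sw : stepwise arF rvars lhs rhs psi;
  sp_src : has_src arF rvars lhs psi (st_t (A a));
  sp_tgt : forall c, b = Some c -> has_tgt arF rvars rhs psi (st_t (A c));
  sp_def : forall x, inI a b x -> comp_at psi (f x) <> None;
  sp_sur : forall q, comp_at psi q <> None -> exists x, inI a b x /\ f x = q;
  sp_ord : forall x y, inI a b x -> inI a b y -> (lt x y <-> lexlt (f x) (f y));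
  sp_den : forall x ph, inI a b x -> comp_at psi (f x) = Some ph ->
             odenotes arF rvars lhs rhs ph (A x) }.

Lemma succ_of a b m c : inI a b m -> (forall x, inI a b x -> le x m) -> b = Some c ->
  is_succ lt m c.
Proof.
move=> [Ham Hmb] Hmax Eb; subst b; split => // z [Hmz Hzc].
apply: (lt_irr_le Hmz); apply: Hmax; split => //; left; exact: le_lt Ham Hmz.
Qed.

Lemma max_case a b m : olt a b -> inI a b m -> (forall x, inI a b x -> le x m) ->
  (lt a m -> exists psi f, spec a (Some m) psi f) -> exists psi f, spec a b psi f.
Proof.
move=> Hab Hm Hmax IH.
case: (proj1 Hm) => [Ham|Eam].
- have [psi1 [f1 S1]] := IH Ham.
  pose f x := if excluded_middle_informative (x = m) then [:: 1] else 0 :: f1 x.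
  have Hin1 : forall x, inI a b x -> x <> m -> inI a (Some m) x.
    move=> x Hx Hxm; split; first exact: proj1 Hx.
    by case: (Hmax x Hx).
  have Hin2 : forall x, inI a (Some m) x -> inI a b x /\ x <> m.
    move=> x [Hax Hxm]; split; first by split => //; exact: olt_trans Hxm (proj2 Hm).
    by move=> E; subst; exact: irr _ Hxm.
  have fm : f m = [:: 1] by rewrite /f; case: excluded_middle_informative.
  have fx : forall x, x <> m -> f x = 0 :: f1 x.
    by move=> x Hx; rewrite /f; case: excluded_middle_informative.
  exists (Cat psi1 (One (phi m))), f; split.
  + split; [exact: sp_sw S1 | exact: one_sw |].
    exists (st_t (A m)); split; [exact: sp_tgt S1 m erefl | exact: one_src].
  + exact: sp_src S1.
  + move=> c Ec /=; rewrite (Hsuc (succ_of Hm Hmax Ec)); exact: one_tgt.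
  + move=> x Hx; case: (excluded_middle_informative (x = m)) => E.
      by subst; rewrite fm.
    rewrite fx //=; exact: sp_def S1 _ (Hin1 _ Hx E).
  + move=> [|[|[|k]] q] //=.
    * move=> /(sp_sur S1) [x [Hx <-]]; have [Hx1 Hx2] := Hin2 _ Hx.
      by exists x; rewrite fx.
    * by case: q => //= _; exists m; rewrite fm.
  + move=> x y Hx Hy.
    case: (excluded_middle_informative (x = m)) => Ex;
    case: (excluded_middle_informative (y = m)) => Ey.
    * subst; rewrite fm /=; split; [by move/irr | by move=> /= [H|[H H']]].
    * subst; rewrite fm fx //=; split.
        move=> H; exfalso; exact: lt_irr_le H (Hmax _ Hy).
      by move=> /= [H|[H H']].
    * subst; rewrite fm fx //=; split => _; first by left.
      case: (Hmax _ Hx) => [//|E]; by exfalso; apply: Ex.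
    * rewrite !fx //=; rewrite (sp_ord S1 (Hin1 _ Hx Ex) (Hin1 _ Hy Ey)).
      split; [by move=> H; right | by move=> /= [H|[H H']]].
  + move=> x ph Hx; case: (excluded_middle_informative (x = m)) => E.
      by subst; rewrite fm /= => -[<-]; exact: one_den.
    rewrite fx //=; exact: sp_den S1 _ _ (Hin1 _ Hx E).
- subst m.
  have Honly : forall x, inI a b x -> x = a.
    move=> x Hx; case: (Hmax x Hx) => // H; exfalso; exact: lt_irr_le H (proj1 Hx).
  exists (One (phi a)), (fun _ => [::]); split.
  + exact: one_sw.
  + exact: one_src.
  + move=> c Ec /=; rewrite (Hsuc (succ_of Hm Hmax Ec)); exact: one_tgt.
  + by [].
  + by move=> [|??] //= _; exists a.
  + move=> x y Hx Hy; rewrite (Honly _ Hx) (Honly _ Hy) /=; split => //; exact: irr.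
  + move=> x ph Hx /= [<-]; rewrite (Honly _ Hx); exact: one_den.
Qed.

Lemma lim_case a b (g : I -> nat) : (forall x y, g x = g y -> x = y) -> olt a b ->
  (forall m, inI a b m -> exists x, inI a b x /\ lt m x) ->
  (forall c, inI a b c -> forall a', lt a' c -> exists psi f, spec a' (Some c) psi f) ->
  exists psi f, spec a b psi f.
Proof.
move=> ginj Hab Hnomax IH.
have Ha : inI a b a by split => //; right.
pose P (m : I) (n : nat) (x : I) :=
  [/\ inI a b x, lt m x & forall y, inI a b y -> g y = n -> lt y x].
have Hnext : forall m n, inI a b m -> exists x, P m n x.
  move=> m n Hm.
  case: (classic (exists y0, inI a b y0 /\ g y0 = n)) => [[y0 [Hy0 Hg]]|Hno].
  - have [z [Hz Hmz Hyz]] : exists z, [/\ inI a b z, le m z & le y0 z].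
      case: (tot m y0) => [H|[E|H]].
      + exists y0; split => //; [by left | by right].
      + subst; exists y0; split => //; by right.
      + exists m; split => //; [by right | by left].
    have [x [Hx Hzx]] := Hnomax z Hz.
    exists x; split => //; first exact: le_lt Hmz Hzx.
    move=> y Hy Hgy; have E : y = y0 by apply: ginj; rewrite Hgy Hg.
    subst y; exact: le_lt Hyz Hzx.
  - have [x [Hx Hmx]] := Hnomax m Hm.
    exists x; split => // y Hy Hgy; exfalso; apply: Hno; by exists y.
have inh : inhabited I := inhabits a.
pose c := fix c n := if n is n'.+1 then epsilon inh (P (c n') n') else a.
have Hc : forall n, inI a b (c n) /\ P (c n) n (c n.+1).
  elim=> [|n [H1 H2]]; first by split => //; exact: epsilon_spec (Hnext _ _ Ha).
  have H3 : inI a b (c n.+1) by case: H2.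
  split => //; exact: epsilon_spec (Hnext _ _ H3).
have cS : forall n, lt (c n) (c n.+1) by move=> n; case: (proj2 (Hc n)).
have cmono : forall i j, i < j -> lt (c i) (c j).
  move=> i; elim=> [//|j IHj] Hij.
  rewrite ltnS leq_eqVlt in Hij; case/orP: Hij => [/eqP ->|H]; first exact: cS.
  exact: trn (IHj H) (cS j).
have cle : forall i j, i <= j -> le (c i) (c j).
  move=> i j; rewrite leq_eqVlt => /orP [/eqP ->|H]; [by right | left; exact: cmono].
have cof : forall y, inI a b y -> lt y (c (g y).+1).
  move=> y Hy; case: (proj2 (Hc (g y))) => _ _; by apply.
have seg_in : forall i y, inI (c i) (Some (c i.+1)) y -> inI a b y.
  move=> i y [H1 H2]; split; first exact: le_le (proj1 (proj1 (Hc i))) H1.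
  exact: olt_trans H2 (proj2 (proj1 (Hc i.+1))).
have Hex : forall y, inI a b y -> exists i, inI (c i) (Some (c i.+1)) y.
  move=> y Hy; move: (cof y Hy); elim: (g y) => [|N IHN] HN.
    by exists 0; split => //; exact: proj1 Hy.
  case: (classic (lt y (c N.+1))) => H; first exact: IHN H.
  by exists N.+1; split => //; exact: not_lt_le H.
have Huniq : forall i j y, inI (c i) (Some (c i.+1)) y -> inI (c j) (Some (c j.+1)) y -> i = j.
  have H0 : forall i j y, i < j -> inI (c i) (Some (c i.+1)) y -> inI (c j) (Some (c j.+1)) y -> False.
    move=> i j y Hij [_ Hi] [Hj _].
    exact: lt_irr_le Hi (le_le (cle _ _ Hij) Hj).
  move=> i j y Hi Hj; case: (ltngtP i j) => // Hij; exfalso.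
  - exact: H0 Hij Hi Hj.
  - exact: H0 Hij Hj Hi.
pose idx y := epsilon (inhabits 0) (fun i => inI (c i) (Some (c i.+1)) y).
have Hidx : forall y, inI a b y -> inI (c (idx y)) (Some (c (idx y).+1)) y.
  move=> y Hy; exact: epsilon_spec (Hex y Hy).
have inh2 : inhabited (pt F Rl * (I -> seq nat)) := inhabits (One (fun _ => None), fun _ => [::]).
pose PS i := epsilon inh2 (fun pf => spec (c i) (Some (c i.+1)) pf.1 pf.2).
have HPS : forall i, spec (c i) (Some (c i.+1)) (PS i).1 (PS i).2.
  move=> i; apply: (epsilon_spec inh2 (fun pf => spec (c i) (Some (c i.+1)) pf.1 pf.2)).
  have [psi [f Hs]] := IH (c i.+1) (proj1 (Hc i.+1)) (c i) (cS i).
  by exists (psi, f).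
exists (Inf (fun i => (PS i).1)), (fun y => idx y :: (PS (idx y)).2 y); split.
- move=> i; split; first exact: sp_sw (HPS i).
  exists (st_t (A (c i.+1))); split; [exact: sp_tgt (HPS i) _ erefl | exact: sp_src (HPS i.+1)].
- exact: sp_src (HPS 0).
- move=> cc Ec; subst b.
  exists (fun i => st_t (A (c i.+1))); split; first by move=> i; exact: sp_tgt (HPS i) _ erefl.
  have Hlimcc : is_limit lt cc.
    split; first by exists a.
    move=> x Hx; case: (classic (lt x a)) => Hxa; first by exists a.
    have [z [[_ Hz] Hxz]] := Hnomax x (conj (not_lt_le Hxa) Hx).
    by exists z.
  move=> n; have [b'' [Hb1 Hb2]] := limit_close Hlimcc n.
  have [N0 HN0] : exists N0, lt b'' (c N0).
    case: (classic (lt b'' a)) => H; first by exists 0.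
    exists (g b'').+1; apply: cof; split => //; exact: not_lt_le H.
  exists N0 => i Hi; apply: Hb2.
    apply: lt_le HN0 (cle _ _ _); exact: leqW.
  exact: proj2 (proj1 (Hc i.+1)).
- move=> y Hy /=; exact: sp_def (HPS _) _ (Hidx y Hy).
- move=> [|i q] //= Hq.
  have [y [Hy Ey]] := sp_sur (HPS i) Hq.
  have Ei : idx y = i := Huniq _ _ _ (Hidx y (seg_in _ _ Hy)) Hy.
  exists y; split; [exact: seg_in _ _ Hy | by rewrite Ei Ey].
- move=> x y Hx Hy /=.
  move: (idx x) (idx y) (Hidx x Hx) (Hidx y Hy) => i j Si Sj.
  split.
  + move=> Hxy; case: (ltngtP i j) => Hij; first by left.
    * exfalso; apply: lt_irr_le (proj2 Sj) _.
      exact: le_le (cle _ _ Hij) (le_le (proj1 Si) (or_introl Hxy)).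
    * subst j; right; split => //; exact: (proj1 (sp_ord (HPS i) Si Sj)).
  + case => [Hij|[Hij H]].
    * exact: lt_le (proj2 Si) (le_le (cle _ _ Hij) (proj1 Sj)).
    * subst j; exact: (proj2 (sp_ord (HPS i) Si Sj)).
- move=> x ph Hx /= H; exact: sp_den (HPS _) _ _ (Hidx x Hx) H.
Qed.

Lemma main_rec (g : I -> nat) : (forall x y, g x = g y -> x = y) ->
  forall b a, olt a b -> exists psi f, spec a b psi f.
Proof.
move=> ginj b; elim/(well_founded_ind oltt_wf): b => b IHb a Hab.
case: (classic (exists m, inI a b m /\ forall x, inI a b x -> le x m)) => [[m [Hm Hmax]]|Hno].
- apply: (max_case Hab Hm Hmax) => Ham; apply: IHb => //; exact: proj2 Hm.
- apply: (lim_case ginj Hab).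
  + move=> m Hm; apply: NNPP => H; apply: Hno; exists m; split => // x Hx.
    apply: not_lt_le => Hmx; apply: H; by exists x.
  + move=> c Hc a' Ha'; apply: IHb => //; exact: proj2 Hc.
Qed.

End Main.

Unset Implicit Arguments.

Theorem mainTheorem3
  (F : finType) (arF : F -> nat) (Rl : Type) (rvars : Rl -> seq nat)
  (lhs rhs : Rl -> tree (F + nat))
  (HT : wf_trs arF rvars lhs rhs)
  (I : Type) (lt : I -> I -> Prop) (t0 : term F) (A : I -> step F Rl)
  (HA : is_redseq arF lhs rhs lt t0 A)
  (Hcount : countable_type I) :
  exists psi : sn_pt F Rl,
    stepwise_or_normal arF rvars lhs rhs psi /\
    denotes arF rvars lhs rhs psi lt t0 A.
Proof.
case: (classic (exists x : I, True)) => [[x _]|HI].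
- have [a0 Ha0] := has_least HA x.
  have [g ginj] := Hcount.
  have [psi [f S]] := main_rec HT HA ginj (Logic.I : olt lt a0 None).
  have Hall : forall y, inI lt a0 None y.
    move=> y; split => //; apply: (not_lt_le HA); exact: Ha0.
  exists (SW psi); split; first exact: sp_sw S.
  split; first by rewrite -(Hleast HA Ha0); exact: sp_src S.
  exists f; split.
  + move=> y; exact: sp_def S _ (Hall y).
  + move=> q /(sp_sur S) [y [_ <-]]; by exists y.
  + move=> y z; exact: sp_ord S _ _ (Hall y) (Hall z).
  + move=> y ph; exact: sp_den S _ _ (Hall y).
- exists (NF _ t0); split; first by case: HA => [[_ H] _ _ _ _].
  split => // y; apply: HI; by exists y.
Qed.
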